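(* Let $D$ be a square-free integer with $D\equiv 2\pmod 4$, let $\mathbb{Z}[\sqrt{D}]=\{x+y\sqrt D:x,y\in\mathbb{Z}\}$, and let $p$ be a prime integer which is irreducible but not prime in $\mathbb{Z}[\sqrt{D}]$, with $p\equiv 3\pmod 4$. Let $z\in I_p(D)$ with $p+\lVert z\rVert/p\equiv 2\pmod 4$. Then $A(p,z)$ does not have property (CZ).
   Context: $\bar z$ is the conjugate and $\lVert z\rVert=z\bar z$ the norm. $I_p(D)$ is the set of all non-unit $z\in\mathbb{Z}[\sqrt{D}]$ such that $z\notin\langle p\rangle$ but there exists $m\notin\langle p\rangle$ with $zm\in\langle p\rangle$ (for such $z$, $p$ divides $\lVert z\rVert$). $A(p,z)=\begin{pmatrix} p & z\\ \bar z & \lVert z\rVert/p\end{pmatrix}$. A matrix $A(p,z)$ has property (CZ) if there exist $a,b,c\in\mathbb{Z}[\sqrt{D}]$ with $a(1-a)=bc$ such that $A(p,z)=\begin{pmatrix} a&b\\ c&1-a\end{pmatrix}\begin{pmatrix}\bar a&\bar c\\ \bar b&1-\bar a\end{pmatrix}$. *)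

(* Defs.v *)
From HB Require Import structures.
From mathcomp Require Import all_boot all_order all_algebra.
From mathcomp Require Import ring.
Set Implicit Arguments. Unset Strict Implicit. Unset Printing Implicit Defensive.
Import Order.TTheory GRing.Theory Num.Theory.
Local Open Scope ring_scope.

(* The ring Z[sqrt D] = { x + y sqrt D : x, y in Z }, as pairs (x, y). *)

Record zsqrt (D : int) := ZS { zre : int; zim : int }.

Section ZSqrt.
Variable D : int.
Local Notation R := (zsqrt D).

Definition zs_pair (z : R) := (zre z, zim z).
Definition pair_zs (p : int * int) : R := ZS D p.1 p.2.
Lemma zs_pairK : cancel zs_pair pair_zs. Proof. by case. Qed.
HB.instance Definition _ := Countable.copy R (can_type zs_pairK).

Lemma zs_eq (a b : R) : zre a = zre b -> zim a = zim b -> a = b.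
Proof. by case: a => ? ?; case: b => ? ? /= -> ->. Qed.

Definition zs0 : R := ZS D 0 0.
Definition zs1 : R := ZS D 1 0.
Definition zsopp (a : R) : R := ZS D (- zre a) (- zim a).
Definition zsadd (a b : R) : R := ZS D (zre a + zre b) (zim a + zim b).
(* (x + y sqrt D)(u + v sqrt D) = (xu + D yv) + (xv + yu) sqrt D *)
Definition zsmul (a b : R) : R :=
  ZS D (zre a * zre b + D * (zim a * zim b)) (zre a * zim b + zim a * zre b).

Lemma zsaddA : associative zsadd.
Proof. by move=> a b c; apply: zs_eq => /=; ring. Qed.
Lemma zsaddC : commutative zsadd.
Proof. by move=> a b; apply: zs_eq => /=; ring. Qed.
Lemma zsadd0 : left_id zs0 zsadd.
Proof. by move=> a; apply: zs_eq => /=; ring. Qed.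
Lemma zsaddN : left_inverse zs0 zsopp zsadd.
Proof. by move=> a; apply: zs_eq => /=; ring. Qed.

HB.instance Definition _ := GRing.isZmodule.Build R zsaddA zsaddC zsadd0 zsaddN.

Lemma zsmulA : associative zsmul.
Proof. by move=> a b c; apply: zs_eq => /=; ring. Qed.
Lemma zsmulC : commutative zsmul.
Proof. by move=> a b; apply: zs_eq => /=; ring. Qed.
Lemma zsmul1 : left_id zs1 zsmul.
Proof. by move=> a; apply: zs_eq => /=; ring. Qed.
Lemma zsmulDl : left_distributive zsmul zsadd.
Proof. by move=> a b c; apply: zs_eq => /=; ring. Qed.
Lemma zs1_neq0 : zs1 != zs0.
Proof. by []. Qed.

HB.instance Definition _ :=
  GRing.Zmodule_isComNzRing.Build R zsmulA zsmulC zsmul1 zsmulDl zs1_neq0.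

Definition zconj (z : R) : R := ZS D (zre z) (- zim z).

(* norm ||z|| = z * conj z = x^2 - D y^2, an (integer) element of Z[sqrt D];
   we record its integer value. *)
Definition znorm (z : R) : int := zre z ^+ 2 - D * zim z ^+ 2.

End ZSqrt.

Section RingDiv.
Variable R : comNzRingType.

Definition is_unit (u : R) : Prop := exists v : R, u * v = 1.

Definition rdvd (a b : R) : Prop := exists c : R, b = a * c.

Definition irreducible_elt (x : R) : Prop :=
  x != 0 /\ ~ is_unit x /\ (forall a b : R, x = a * b -> is_unit a \/ is_unit b).

Definition prime_elt (x : R) : Prop :=
  x != 0 /\ ~ is_unit x /\
  (forall a b : R, rdvd x (a * b) -> rdvd x a \/ rdvd x b).

End RingDiv.

Definition Ip (D : int) (p : nat) (z : zsqrt D) : Prop :=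
  ~ is_unit z /\ ~ rdvd (p%:R : zsqrt D) z /\
  exists m : zsqrt D, ~ rdvd (p%:R : zsqrt D) m /\ rdvd (p%:R : zsqrt D) (z * m).

Definition mx2 (R : Type) (a b c d : R) : 'M[R]_2 :=
  \matrix_(i < 2, j < 2)
    if i == 0 then (if j == 0 then a else b) else (if j == 0 then c else d).

Definition Amat (D : int) (p : nat) (z : zsqrt D) : 'M[zsqrt D]_2 :=
  mx2 (p%:R) z (zconj z) (((znorm z %/ p%:Z)%Z)%:~R).

Definition propCZ (D : int) (M : 'M[zsqrt D]_2) : Prop :=
  exists a b c : zsqrt D,
    a * (1 - a) = b * c /\
    M = mx2 a b c (1 - a) *m mx2 (zconj a) (zconj c) (zconj b) (1 - zconj a).

Definition squarefree_int (D : int) : Prop :=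
  forall k : nat, (1 < k)%N -> ~~ (k ^ 2 %| `|D|)%N.

(* Main.v *)
Require Import Defs.
From mathcomp Require Import all_boot all_order all_algebra.
From mathcomp Require Import ring.
Import GRing.Theory Num.Theory.
Local Open Scope ring_scope.

Definition L4 : seq 'Z_4 := [:: 0; 1; 2; 3].
Lemma fin : all (fun xa : 'Z_4 => all (fun ya => all (fun xb => all (fun yb => all (fun xc => all (fun yc =>
  ~~ [&& (3 == xa^+2 - 2 * ya^+2 + (xb^+2 - 2*yb^+2)),
         (3 == xc^+2 - 2 * yc^+2 + ((1-xa)^+2 - 2*ya^+2)) &
         (xb*yc + yb*xc == xa*(-ya) + ya*(1-xa))]) L4) L4) L4) L4) L4) L4.
Proof. vm_compute. reflexivity. Qed.
Lemma inL4 (x : 'Z_4) : x \in L4.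
Proof. by case: x => [[|[|[|[|n]]]] H]. Qed.

Definition phi (x : int) : 'Z_4 := x%:~R.
Lemma phi_mod x : phi x = phi (x %% 4)%Z.
Proof.
rewrite /phi [in LHS](divz_eq x 4) intrD intrM.
have -> : ((4 : int)%:~R : 'Z_4) = 0 by apply/eqP.
by rewrite mulr0 add0r.
Qed.

Section Z.
Variable D : int.
Lemma zreD (a b : zsqrt D) : zre (a + b) = zre a + zre b. Proof. by []. Qed.
Lemma zimD (a b : zsqrt D) : zim (a + b) = zim a + zim b. Proof. by []. Qed.
Lemma zreN (a : zsqrt D) : zre (- a) = - zre a. Proof. by []. Qed.
Lemma zimN (a : zsqrt D) : zim (- a) = - zim a. Proof. by []. Qed.
Lemma zreM (a b : zsqrt D) : zre (a * b) = zre a * zre b + D * (zim a * zim b). Proof. by []. Qed.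
Lemma zimM (a b : zsqrt D) : zim (a * b) = zre a * zim b + zim a * zre b. Proof. by []. Qed.
Lemma zre1 : zre (1 : zsqrt D) = 1. Proof. by []. Qed.
Lemma zim1 : zim (1 : zsqrt D) = 0. Proof. by []. Qed.
Lemma zre_nat n : zre (n%:R : zsqrt D) = n%:Z.
Proof. elim: n => [//|n IH]; by rewrite mulrS zreD IH zre1 -addn1 PoszD addrC. Qed.
Lemma zre_int k : zre (k%:~R : zsqrt D) = k.
Proof. case: k => n; first by rewrite zre_nat. by rewrite NegzE mulrNz zreN zre_nat. Qed.
End Z.

Theorem corollary3p8 (D : int) (p : nat) (z : zsqrt D) :
  squarefree_int D ->
  (D = 2 %[mod 4])%Z ->
  prime p ->
  irreducible_elt (p%:R : zsqrt D) ->
  ~ prime_elt (p%:R : zsqrt D) ->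
  (p%:Z = 3 %[mod 4])%Z ->
  Ip p z ->
  (p%:Z + (znorm z %/ p%:Z)%Z = 2 %[mod 4])%Z ->
  ~ propCZ (Amat p z).
Proof.
move=> _ HD _ _ _ Hp _ Hpq [a [b [c [Habc E]]]].
have E00 := congr1 (fun M : 'M[zsqrt D]_2 => zre (M 0 0)) E.
have E11 := congr1 (fun M : 'M[zsqrt D]_2 => zre (M 1 1)) E.
have E3 := congr1 (@zim D) Habc.
move: E00 E11 E3; rewrite /Amat /mx2 !mxE !big_ord_recr !big_ord0 /= !mxE /=.
rewrite zre_nat zre_int.
move: Hpq; generalize (znorm z %/ p%:Z)%Z => q Hpq.
move: (zre a) (zim a) (zre b) (zim b) (zre c) (zim c) => xa ya xb yb xc yc.
move=> E00 E11 E3.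
have hD : phi D = 2 by rewrite phi_mod HD.
have hp : phi p%:Z = 3 by rewrite phi_mod Hp.
have hpq : phi p%:Z + phi q = 2 by rewrite /phi -intrD -/(phi _) phi_mod Hpq.
have hq : phi q = 3.
  by move: hpq; rewrite hp => H; rewrite -(addKr 3 (phi q)) H; apply/eqP.
have F := fin.
move: (congr1 phi E00) (congr1 phi E11) (congr1 phi E3).
rewrite /phi !(intrD, intrM, intrN) -!/(phi _) hp hq hD.
have -> : phi 0 = 0 by [].
have -> : phi 1 = 1 by rewrite /phi.
move=> e1 e2 e3.
move/allP: F => /(_ _ (inL4 (phi xa)))/allP/(_ _ (inL4 (phi ya)))/allP/(_ _ (inL4 (phi xb))).
move=> /allP/(_ _ (inL4 (phi yb)))/allP/(_ _ (inL4 (phi xc)))/allP/(_ _ (inL4 (phi yc))) H.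
apply: (negP H); apply/and3P; split; apply/eqP; [rewrite e1 | rewrite e2 | rewrite -e3]; ring.
Qed.
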